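(* Let $G$ be a connected graph with at least $5$ vertices and let $H$ be a connected component of the complement $\overline{G}$ such that $H$ is isomorphic to the cycle $C_4$. Then no vertex of $H$ is a basis forced vertex of $G$.
   Context: All graphs are finite and simple. $\overline{G}$ denotes the complement graph. For vertices $u,v$ of a connected graph $G$, $d(u,v)$ is the length of a shortest $u$–$v$ path. A set $R\subseteq V(G)$ is a resolving set if for all distinct $x,y\in V(G)$ there is $r\in R$ with $d(r,x)\neq d(r,y)$. The metric dimension $\dim(G)$ is the minimum cardinality of a resolving set, and a resolving set of cardinality $\dim(G)$ is a metric basis. A vertex is a basis forced vertex if it belongs to every metric basis of $G$. *)

(* Defs.v *)
From mathcomp Require Import all_boot.
Set Implicit Arguments. Unset Strict Implicit. Unset Printing Implicit Defensive.

Section Graphs.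
Variable T : finType.
Implicit Types (e : rel T) (x y : T).

Definition simple_graph e := symmetric e /\ irreflexive e.

Definition compl_rel e : rel T := fun x y => (x != y) && ~~ e x y.

Definition connected_graph e := forall x y, connect e x y.

Fixpoint reach e (n : nat) (x y : T) : bool :=
  if n is n'.+1 then (x == y) || [exists z, e x z && reach e n' z y]
  else x == y.

(* d(x,y): length of a shortest x-y path. In a connected graph on #|T|
   vertices it is < #|T|, so the least n < #|T| with reach e n x y. *)
Definition dist e x y : nat := find (fun n => reach e n x y) (iota 0 #|T|).

Definition resolving e (R : {set T}) :=
  forall x y, x != y -> exists2 r, r \in R & dist e r x != dist e r y.

Definition metric_basis e (R : {set T}) :=
  resolving e R /\ forall R' : {set T}, resolving e R' -> #|R| <= #|R'|.

Definition basis_forced e v := forall R, metric_basis e R -> v \in R.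

Definition is_component (f : rel T) (H : {set T}) :=
  exists x, H = [set y | connect f x y].

Definition c4_rel : rel 'I_4 :=
  fun i j => (j == (i.+1 %% 4) :> nat) || (i == (j.+1 %% 4) :> nat).

Definition induced_iso_C4 (f : rel T) (H : {set T}) :=
  exists g : 'I_4 -> T,
    [/\ injective g, (forall v, v \in H <-> exists i, g i = v)
      & forall i j, f (g i) (g j) = c4_rel i j].
End Graphs.

(* Main.v *)
Require Import Defs.
From mathcomp Require Import all_boot.
Set Implicit Arguments. Unset Strict Implicit. Unset Printing Implicit Defensive.

Definition sw (T : eqType) (x1 x2 z : T) := if z == x1 then x2 else if z == x2 then x1 else z.

Lemma swK (T : eqType) (x1 x2 : T) : x1 != x2 -> involutive (sw x1 x2).
Proof.
move=> n12 z; rewrite /sw.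
have [->|n1] := eqVneq z x1; first by rewrite eq_sym (negbTE n12) eqxx.
have [->|n2] := eqVneq z x2; first by rewrite eqxx.
by rewrite (negbTE n1) (negbTE n2).
Qed.

Lemma sw_inj (T : eqType) (x1 x2 : T) : x1 != x2 -> injective (sw x1 x2).
Proof. move=> n; exact: (can_inj (swK n)). Qed.

Lemma sw_e (T : finType) (e : rel T) (x1 x2 : T) :
  symmetric e -> irreflexive e -> x1 != x2 ->
  (forall y, y != x1 -> y != x2 -> e x1 y = e x2 y) ->
  forall u w, e (sw x1 x2 u) (sw x1 x2 w) = e u w.
Proof.
move=> sy ir n12 tw u w.
have n21 : x2 != x1 by rewrite eq_sym.
have cls : forall z, [\/ z = x1, z = x2 | (z != x1) && (z != x2)].
  move=> z; have [->|a] := eqVneq z x1; first by constructor 1.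
  have [->|b] := eqVneq z x2; first by constructor 2.
  by constructor 3; apply/andP; split.
rewrite /sw.
case: (cls u) => [->|->|/andP[n1 n2]]; case: (cls w) => [->|->|/andP[m1 m2]];
  rewrite ?eqxx ?(negbTE n12) ?(negbTE n21) ?(negbTE n1) ?(negbTE n2)
    ?(negbTE m1) ?(negbTE m2) ?ir ?(sy x2 x1) //.
- by rewrite tw.
- by rewrite tw.
- by rewrite (sy u x2) -tw // sy.
- by rewrite (sy u x1) tw // sy.
Qed.

Lemma reach_sw (T : finType) (e : rel T) (x1 x2 : T) :
  symmetric e -> irreflexive e -> x1 != x2 ->
  (forall y, y != x1 -> y != x2 -> e x1 y = e x2 y) ->
  forall n u w, reach e n (sw x1 x2 u) (sw x1 x2 w) = reach e n u w.
Proof.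
move=> sy ir n12 tw; elim=> [|n IH] u w /=; first by rewrite (inj_eq (sw_inj n12)).
rewrite (inj_eq (sw_inj n12)); congr (_ || _).
apply/existsP/existsP => [[z Hz]|[z Hz]].
- exists (sw x1 x2 z); move: Hz; rewrite -{1 2}[z](swK n12).
  by rewrite (sw_e sy ir n12 tw) IH.
- by exists (sw x1 x2 z); rewrite (sw_e sy ir n12 tw) IH.
Qed.

Lemma dist_sw (T : finType) (e : rel T) (x1 x2 : T) :
  symmetric e -> irreflexive e -> x1 != x2 ->
  (forall y, y != x1 -> y != x2 -> e x1 y = e x2 y) ->
  forall u w, dist e (sw x1 x2 u) (sw x1 x2 w) = dist e u w.
Proof.
move=> sy ir n12 tw u w; rewrite /dist; apply: eq_find => n.
exact: reach_sw.
Qed.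

Lemma dist0 (T : finType) (e : rel T) x y : (dist e x y == 0) = (x == y).
Proof.
have : 0 < #|T| by apply/card_gt0P; exists x.
rewrite /dist; case: #|T| => [//|n] _ /=.
by case: (x == y).
Qed.

Lemma dist1 (T : finType) (e : rel T) x y : 1 < #|T| -> x != y ->
  (dist e x y == 1) = e x y.
Proof.
rewrite /dist; case: #|T| => [//|[//|n]] _ nxy /=.
rewrite (negbTE nxy) /=.
have -> : [exists z, e x z && (z == y)] = e x y.
  apply/existsP/idP => [[z /andP[H /eqP <-]]//|H]; by exists y; rewrite H eqxx.
by case: (e x y).
Qed.

Definition resolvingb (T : finType) (e : rel T) (R : {set T}) :=
  [forall x, forall y, (x != y) ==> [exists r in R, dist e r x != dist e r y]].

Lemma resolvingP (T : finType) (e : rel T) R : reflect (resolving e R) (resolvingb e R).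
Proof.
apply: (iffP forallP) => H.
- move=> x y nxy; have /forallP/(_ y) := H x; rewrite nxy /= => /existsP [r /andP[]].
  by exists r.
- move=> x; apply/forallP => y; apply/implyP => nxy; have [r Hr Hd] := H x y nxy.
  by apply/existsP; exists r; rewrite Hr.
Qed.

Lemma exists_basis (T : finType) (e : rel T) : exists R, metric_basis e R.
Proof.
have HT : resolvingb e setT.
  apply/resolvingP => x y nxy; exists x; first by rewrite inE.
  have /eqP-> : dist e x x == 0 by rewrite dist0.
  by rewrite eq_sym dist0.
case: (arg_minnP (fun R : {set T} => #|R|) HT) => R HR Hmin.
exists R; split; first exact/resolvingP.
by move=> R' /resolvingP; apply: Hmin.
Qed.

Lemma key (T : finType) (e : rel T) (H : {set T}) (a b c d : T) :
  symmetric e -> irreflexive e -> 1 < #|T| ->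
  (forall x y, x \in H -> compl_rel e x y -> y \in H) ->
  (forall y, y \in H -> y \in [:: a; b; c; d]) ->
  a \in H -> b \in H -> c \in H -> d \in H ->
  compl_rel e a b -> compl_rel e b c -> compl_rel e c d -> compl_rel e d a ->
  e a c -> e b d ->
  exists2 R, metric_basis e R & a \notin R.
Proof.
move=> sy ir T2 Hcl HmemH Ha Hb Hc Hd cab cbc ccd cda eac ebd.
have nac : a != c by apply/eqP => E; move: eac; rewrite E ir.
have nbd : b != d by apply/eqP => E; move: ebd; rewrite E ir.
have out : forall x y, x \in H -> y \notin H -> e x y.
  move=> x y xH yH; apply/negPn/negP => nexy.
  have nxy : x != y by apply/eqP => E; move: yH; rewrite -E xH.
  by move: yH; rewrite (Hcl x y xH) // /compl_rel nxy nexy.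
move: cab cbc ccd cda => /andP[nab eab] /andP[nbc ebc] /andP[ncd ecd] /andP[nda eda].
move: eab ebc ecd eda => /negbTE eab /negbTE ebc /negbTE ecd /negbTE eda.
have twac : forall y, y != a -> y != c -> e a y = e c y.
  move=> y ya yc; have [yH|yH] := boolP (y \in H); last by rewrite !out.
  move: (HmemH y yH); rewrite !inE (negbTE ya) (negbTE yc) /= => /orP[]/eqP ->.
  - by rewrite eab sy ebc.
  - by rewrite ecd sy eda.
have twbd : forall y, y != b -> y != d -> e b y = e d y.
  move=> y yb yd; have [yH|yH] := boolP (y \in H); last by rewrite !out.
  move: (HmemH y yH); rewrite !inE (negbTE yb) (negbTE yd) /= ?orbF => /orP[]/eqP ->.
  - by rewrite sy eab eda.
  - by rewrite ebc sy ecd.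
have dac : forall x, x != a -> x != c -> dist e c x = dist e a x.
  move=> x xa xc; rewrite -(dist_sw sy ir nac twac a x) /sw eqxx.
  by rewrite (negbTE xa) (negbTE xc).
have dbd : forall r, r != b -> r != d -> dist e r b = dist e r d.
  move=> r rb rd; rewrite -(dist_sw sy ir nbd twbd r b) /sw eqxx.
  by rewrite (negbTE rb) (negbTE rd).
have claim1 : forall R, resolving e R -> (b \in R) || (d \in R).
  move=> R HR; have [r Hr Hne] := HR b d nbd.
  have [E|rb] := eqVneq r b; first by rewrite -E Hr.
  have [E|rd] := eqVneq r d; first by rewrite -E Hr orbT.
  by rewrite dbd ?eqxx in Hne.
have claim2 : forall R, metric_basis e R -> a \in R -> c \notin R.
  move=> R [HR Hmin] aR; apply/negP => cR.
  suff /Hmin : resolving e (R :\ c).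
    by rewrite (cardsD1 c R) cR add1n ltnn.
  have aR' : a \in R :\ c by rewrite !inE nac aR.
  pose P x y := exists2 r, r \in R :\ c & dist e r x != dist e r y.
  have Psym : forall x y, P x y -> P y x.
    by move=> x y [r Hr Hdd]; exists r; rewrite // eq_sym.
  have Pa : forall y, y != a -> P a y.
    move=> y ya; exists a => //.
    have /eqP-> : dist e a a == 0 by rewrite dist0.
    by rewrite eq_sym dist0 eq_sym.
  have Pc : forall y, y != a -> y != c -> P c y.
    move=> y ya yc.
    have [Hne|Heq] := boolP (dist e a c != dist e a y); first by exists a.
    move/negPn/eqP: Heq => Heq.
    have d1 : dist e a c == 1 by rewrite dist1.
    have eay : e a y.
      by rewrite -dist1 // -?Heq // eq_sym.
    have yH : y \notin H.
      apply/negP => yH; move: (HmemH y yH).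
      rewrite !inE (negbTE ya) (negbTE yc) /= ?orbF => /orP[]/eqP E; subst y.
      - by rewrite eab in eay.
      - by rewrite sy eda in eay.
    move: (claim1 R HR) => /orP[] b'R.
    + exists b; first by rewrite !inE b'R nbc.
      have nby : b != y by apply/eqP => E; move: yH; rewrite -E Hb.
      have /eqP -> : dist e b y == 1 by rewrite dist1 // out.
      by rewrite dist1 // ebc.
    + exists d; first by rewrite !inE b'R eq_sym ncd.
      have ndy : d != y by apply/eqP => E; move: yH; rewrite -E Hd.
      have /eqP -> : dist e d y == 1 by rewrite dist1 // out.
      have ndc : d != c by rewrite eq_sym.
      by rewrite dist1 // (sy d c) ecd.
  move=> x y nxy; have [r Hr Hne] := HR x y nxy.
  have [rc|rc] := eqVneq r c; last by exists r; rewrite // !inE rc.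
  subst r.
  have [xa|xa] := eqVneq x a; first by subst x; apply: Pa; rewrite eq_sym.
  have [ya|ya] := eqVneq y a; first by subst y; apply: Psym; apply: Pa.
  have [xc|xc] := eqVneq x c; first by subst x; apply: Pc => //; rewrite eq_sym.
  have [yc|yc] := eqVneq y c; first by subst y; apply: Psym; apply: Pc.
  by exists a => //; rewrite -(dac x) // -(dac y).
have [R0 HR0] := exists_basis e.
have [aR|aR] := boolP (a \in R0); last by exists R0.
have cR := claim2 R0 HR0 aR.
exists (sw a c @: R0).
- case: HR0 => HR Hmin; split.
  + move=> x y nxy.
    have : sw a c x != sw a c y by rewrite (inj_eq (sw_inj nac)).
    case/HR => r Hr Hdd; exists (sw a c r); first exact: imset_f.
    by rewrite -{1}(swK nac x) -{1}(swK nac y) !(dist_sw sy ir nac twac).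
  + by move=> R' /Hmin; rewrite card_imset //; apply: sw_inj.
- apply/imsetP => [[z Hz Eaz]].
  have : z = c by rewrite -(swK nac z) -Eaz /sw eqxx.
  by move=> E; move: cR; rewrite -E Hz.
Qed.

Definition o0 : 'I_4 := @Ordinal 4 0 isT.
Definition o1 : 'I_4 := @Ordinal 4 1 isT.
Definition o2 : 'I_4 := @Ordinal 4 2 isT.
Definition o3 : 'I_4 := @Ordinal 4 3 isT.

Theorem lemma8 (T : finType) (e : rel T) (H : {set T}) :
  simple_graph e -> connected_graph e -> 5 <= #|T| ->
  is_component (compl_rel e) H -> induced_iso_C4 (compl_rel e) H ->
  forall v, v \in H -> ~ basis_forced e v.
Proof.
move=> [sy ir] _ T5 [x0 HE] [g [ginj gH Hf]] v vH Hbf.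
have T2 : 1 < #|T| by apply: leq_trans _ T5.
have Hcl : forall x y, x \in H -> compl_rel e x y -> y \in H.
  move=> x y; rewrite HE !inE => Hx Hxy; apply: connect_trans Hx _.
  exact: connect1.
have gin : forall i, g i \in H by move=> i; apply/gH; exists i.
have gmem : forall y, y \in H -> y \in [:: g o0; g o1; g o2; g o3].
  move=> y /gH [[[|[|[|[|k]]]] Hi] <-] //; rewrite !inE;
  by [rewrite (_ : Ordinal Hi = o0) ?eqxx //; apply: val_inj
     |rewrite (_ : Ordinal Hi = o1) ?eqxx ?orbT //; apply: val_inj
     |rewrite (_ : Ordinal Hi = o2) ?eqxx ?orbT //; apply: val_inj
     |rewrite (_ : Ordinal Hi = o3) ?eqxx ?orbT //; apply: val_inj].
have ef : forall i j, i != j -> ~~ c4_rel i j -> e (g i) (g j).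
  move=> i j ij nc; move: (Hf i j); rewrite /compl_rel (inj_eq ginj) ij (negbTE nc) /=.
  by move/negbFE.
have cf : forall i j, c4_rel i j -> compl_rel e (g i) (g j) by move=> i j; rewrite Hf.
have K := fun a b c d => @key T e H a b c d sy ir T2 Hcl.
have [i Ei] := (gH v).1 vH; subst v.
have gm : forall y, y \in H -> [|| y == g o0, y == g o1, y == g o2 | y == g o3].
  by move=> y /gmem; rewrite !inE.
suff [R HR nR] : exists2 R, metric_basis e R & g i \notin R.
  by move: nR; rewrite Hbf.
clear Hbf vH.
case: i => [[|[|[|[|k]]]] Hi] //.
  - rewrite (_ : Ordinal Hi = o0); last exact: val_inj.
    apply: (K (g o0) (g o1) (g o2) (g o3)); try exact: gin; try (apply: cf; done);
      try (apply: ef; done).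
    by move=> y /gm; rewrite !inE; case/or4P => ->; rewrite ?orbT.
  - rewrite (_ : Ordinal Hi = o1); last exact: val_inj.
    apply: (K (g o1) (g o2) (g o3) (g o0)); try exact: gin; try (apply: cf; done);
      try (apply: ef; done).
    by move=> y /gm; rewrite !inE; case/or4P => ->; rewrite ?orbT.
  - rewrite (_ : Ordinal Hi = o2); last exact: val_inj.
    apply: (K (g o2) (g o3) (g o0) (g o1)); try exact: gin; try (apply: cf; done);
      try (apply: ef; done).
    by move=> y /gm; rewrite !inE; case/or4P => ->; rewrite ?orbT.
  - rewrite (_ : Ordinal Hi = o3); last exact: val_inj.
    apply: (K (g o3) (g o0) (g o1) (g o2)); try exact: gin; try (apply: cf; done);
      try (apply: ef; done).
    by move=> y /gm; rewrite !inE; case/or4P => ->; rewrite ?orbT.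
Qed.
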